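(* Let $f:\{0,1\}^n\to\{0,1\}$, $\delta>0$, $\beta_1\ge0$, let $\mu$ be a bit-wise product probability distribution on $\{0,1\}^n$, and let $A$ be a subcube with $\mu(A)>0$ and $\mu_1(A)\le\delta\mu_0(A)$. Suppose $(w_R)$, indexed by subcubes, satisfies $w_R\ge0$, $\sum_{R\ni x}w_R\le1$ for all $x\in\{0,1\}^n$, and $\sum_{R\ni x}w_R\le\beta_1$ for all $x\in f^{-1}(0)$. Let $\mathcal B$ be the set of subcubes $B$ whose support is disjoint from the support of $A$. Then $\sum_{B\in\mathcal B}\mu_1(B)w_B\le\beta_1+\delta$.
   Context: A subcube with support $s\in\{0,1,\star\}^n$ is $\{x: s_i\ne\star\Rightarrow x_i=s_i\}$; its support is the set $\{i:s_i\in\{0,1\}\}$. For $A\subseteq\{0,1\}^n$, $\mu_z(A)=\mu(A\cap f^{-1}(z))$. Bit-wise product: $\mu(x)=\prod_i p_i(x_i)$ with $p_i(0)+p_i(1)=1$. *)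

(* Defs.v *)
From HB Require Import structures.
From mathcomp Require Import all_boot all_order all_algebra.
Set Implicit Arguments. Unset Strict Implicit. Unset Printing Implicit Defensive.
Import Order.TTheory GRing.Theory Num.Theory.
Local Open Scope ring_scope.

Definition point (n : nat) := {ffun 'I_n -> bool}.
(* a subcube is given by its pattern s in {0,1,*}^n; None stands for * *)
Definition subcube (n : nat) := {ffun 'I_n -> option bool}.

Definition in_cube n (s : subcube n) (x : point n) : bool :=
  [forall i, if s i is Some b then x i == b else true].

Definition supp n (s : subcube n) : {set 'I_n} := [set i | s i != None].

Definition mu_pt (R : numDomainType) n (p : 'I_n -> R) (x : point n) : R :=
  \prod_(i < n) (if x i then p i else 1 - p i).

Definition mu_cube (R : numDomainType) n (p : 'I_n -> R) (s : subcube n) : R :=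
  \sum_(x : point n | in_cube s x) mu_pt p x.

Definition mu_z (R : numDomainType) n (p : 'I_n -> R) (f : point n -> bool)
  (z : bool) (s : subcube n) : R :=
  \sum_(x : point n | in_cube s x && (f x == z)) mu_pt p x.

(* Main.v *)
Require Import Defs.
From HB Require Import structures.
From mathcomp Require Import all_boot all_order all_algebra.
Import Order.TTheory GRing.Theory Num.Theory.
Local Open Scope ring_scope.
Set Implicit Arguments. Unset Strict Implicit.

Definition wt {R : numDomainType} {n} (p : 'I_n -> R) (i : 'I_n) (b : bool) : R :=
  if b then p i else 1 - p i.

Definition cnd {n} (s : subcube n) (i : 'I_n) : pred bool :=
  fun b => if s i is Some c then b == c else true.

Lemma sum_cube (R : numDomainType) n (p : 'I_n -> R) (P : 'I_n -> pred bool) :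
  \sum_(x : point n | [forall i, P i (x i)]) mu_pt p x =
  \prod_(i < n) \sum_(b | P i b) wt p i b.
Proof.
rewrite bigA_distr_big_dep; apply: eq_big => x //.
Qed.

Lemma mu_cubeE (R : numDomainType) n (p : 'I_n -> R) (s : subcube n) :
  mu_cube p s = \prod_(i < n) \sum_(b | cnd s i b) wt p i b.
Proof. by rewrite -sum_cube. Qed.

Lemma mu_capE (R : numDomainType) n (p : 'I_n -> R) (A B : subcube n) :
  [disjoint supp B & supp A] ->
  \sum_(x : point n | in_cube A x && in_cube B x) mu_pt p x = mu_cube p A * mu_cube p B.
Proof.
move=> dis.
have -> : \sum_(x : point n | in_cube A x && in_cube B x) mu_pt p x =
  \sum_(x : point n | [forall i, (fun i b => cnd A i b && cnd B i b) i (x i)]) mu_pt p x.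
  apply: eq_bigl => x; rewrite /in_cube.
  apply/andP/forallP => [[/forallP HA /forallP HB] i|H]. by rewrite /cnd /=; apply/andP; split; [apply: HA|apply: HB].
  by split; apply/forallP => i; have /andP[] := H i.
rewrite (sum_cube p (fun i b => cnd A i b && cnd B i b)) !mu_cubeE -big_split /=; apply: eq_bigr => i _.
have one : \sum_(b : bool | true) wt p i b = 1.
  by rewrite big_mkcond big_bool /wt /= addrC subrK.
move/disjointFr: dis => /(_ i); rewrite !inE.
case EA: (A i) => [a|]; case EB: (B i) => [c|] H; rewrite /cnd EA EB /=.
- by move: H => /(_ isT).
- under eq_bigl => b do rewrite andbT. by rewrite one mulr1.
- by rewrite one mul1r.
- by rewrite one mul1r.
Qed.

Lemma mupt_ge0 (R : realFieldType) n (p : 'I_n -> R) x :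
  (forall i, 0 <= p i <= 1) -> 0 <= mu_pt p x.
Proof.
move=> hp; apply: prodr_ge0 => i _; have /andP[h0 h1] := hp i.
by case: (x i) => //; rewrite subr_ge0.
Qed.

Lemma muz_le (R : realFieldType) n (p : 'I_n -> R) f z s :
  (forall i, 0 <= p i <= 1) -> mu_z p f z s <= mu_cube p s.
Proof.
move=> hp; rewrite /mu_z /mu_cube [X in _ <= X](bigID (fun x => f x == z)) /=.
by rewrite lerDl; apply: sumr_ge0 => x _; apply: mupt_ge0.
Qed.

Theorem mainTheorem13 (R : realFieldType) (n : nat) (f : point n -> bool)
  (delta beta1 : R) (p : 'I_n -> R) (A : subcube n) (w : subcube n -> R) :
  0 < delta -> 0 <= beta1 ->
  (forall i, 0 <= p i <= 1) ->
  0 < mu_cube p A ->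
  mu_z p f true A <= delta * mu_z p f false A ->
  (forall Q, 0 <= w Q) ->
  (forall x : point n, \sum_(Q : subcube n | in_cube Q x) w Q <= 1) ->
  (forall x : point n, f x = false -> \sum_(Q : subcube n | in_cube Q x) w Q <= beta1) ->
  \sum_(B : subcube n | [disjoint supp B & supp A]) mu_z p f true B * w B
    <= beta1 + delta.
Proof.
move=> hd hb hp hA hAd hw h1 h0.
rewrite -(ler_pM2l hA) mulr_sumr.
apply: (@le_trans _ _ (\sum_(B : subcube n | [disjoint supp B & supp A])
   \sum_(x : point n | in_cube A x && in_cube B x) mu_pt p x * w B)).
  apply: ler_sum => B hB; rewrite -mulr_suml (mu_capE p hB) mulrA.
  apply: ler_wpM2r; first exact: hw.
  by apply: ler_wpM2l; [exact: ltW | exact: muz_le].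
rewrite (exchange_big_dep (fun x => in_cube A x)) /=; last by move=> B x _ /andP[].
apply: (@le_trans _ _ (\sum_(x : point n | in_cube A x)
   mu_pt p x * (if f x then 1 else beta1))).
  apply: ler_sum => x hx; rewrite -mulr_sumr; apply: ler_wpM2l; first exact: mupt_ge0.
  apply: (@le_trans _ _ (\sum_(Q : subcube n | in_cube Q x) w Q)).
    rewrite big_mkcond [X in _ <= X]big_mkcond /=; apply: ler_sum => Q _.
    rewrite hx /=; case: (in_cube Q x); rewrite ?andbT ?andbF //.
    by case: ([disjoint _ & _]).
  by case Efx: (f x); [apply: h1 | apply: h0].
rewrite (bigID (fun x => f x == true)) /=.
have E1 : \sum_(x : point n | in_cube A x && (f x == true))
   mu_pt p x * (if f x then 1 else beta1) = mu_z p f true A.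
  by rewrite /mu_z; apply: eq_bigr => x /andP[_ /eqP ->]; rewrite mulr1.
have E0 : \sum_(x : point n | in_cube A x && ~~ (f x == true))
   mu_pt p x * (if f x then 1 else beta1) = beta1 * mu_z p f false A.
  rewrite /mu_z mulr_sumr; apply: eq_big => x.
    by case: (f x); rewrite ?andbT ?andbF.
  by move=> /andP[_]; case: (f x) => // _; rewrite mulrC.
rewrite E1 E0.
apply: (@le_trans _ _ (delta * mu_z p f false A + beta1 * mu_z p f false A)).
  by rewrite lerD2r.
rewrite -mulrDl (addrC delta) (mulrC (mu_cube p A)); apply: ler_wpM2l; first by rewrite addr_ge0 // ltW.
exact: muz_le.
Qed.
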